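(* Let $\mathcal L$ be an optionality-differentiating choice logic. Then for all $\mathcal L$-formulas $A,B$: $A\equiv^{s}_{\mathcal L}B$ if and only if $A\equiv^{\mathrm{full}}_{\mathcal L}B$.
   Context: Fix a countably infinite set $\mathcal U$ of propositional variables. Let $\mathbb N=\{1,2,3,\dots\}$ and $\overline{\mathbb N}=\mathbb N\cup\{\infty\}$, with $n<\infty$ for all $n\in\mathbb N$. An interpretation is a set $\mathcal I\subseteq\mathcal U$ (the variables set to true). A choice logic $\mathcal L$ is specified by a finite set $C_{\mathcal L}$ of binary connective symbols disjoint from $\{\neg,\land,\lor\}$ and, for each $\circ\in C_{\mathcal L}$, a function $\mathrm{opt}_\circ:\mathbb N^2\to\mathbb N$ with $\mathrm{opt}_\circ(k,\ell)\le (k+1)(\ell+1)$ for all $k,\ell$, and a function $\deg_\circ:\mathbb N^2\times\overline{\mathbb N}^2\to\overline{\mathbb N}$ such that for all $k,\ell\in\mathbb N$, $m,n\in\overline{\mathbb N}$, either $\deg_\circ(k,\ell,m,n)\le \mathrm{opt}_\circ(k,\ell)$ or $\deg_\circ(k,\ell,m,n)=\infty$. The $\mathcal L$-formulas are built from variables in $\mathcal U$ using unary $\neg$ and binary $\land,\lor$ and the connectives in $C_{\mathcal L}$. The optionality $\mathrm{opt}_{\mathcal L}$ of formulas is defined by: $\mathrm{opt}_{\mathcal L}(a)=1$ for $a\in\mathcal U$; $\mathrm{opt}_{\mathcal L}(\neg F)=1$; $\mathrm{opt}_{\mathcal L}(F\land G)=\mathrm{opt}_{\mathcal L}(F\lor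 G)=\max(\mathrm{opt}_{\mathcal L}(F),\mathrm{opt}_{\mathcal L}(G))$; $\mathrm{opt}_{\mathcal L}(F\circ G)=\mathrm{opt}_\circ(\mathrm{opt}_{\mathcal L}(F),\mathrm{opt}_{\mathcal L}(G))$ for $\circ\in C_{\mathcal L}$. The satisfaction degree $\deg_{\mathcal L}(\mathcal I,F)\in\overline{\mathbb N}$ is defined by: $\deg_{\mathcal L}(\mathcal I,a)=1$ if $a\in\mathcal I$ and $\infty$ otherwise; $\deg_{\mathcal L}(\mathcal I,\neg F)=1$ if $\deg_{\mathcal L}(\mathcal I,F)=\infty$ and $\infty$ otherwise; $\deg_{\mathcal L}(\mathcal I,F\land G)=\max(\deg_{\mathcal L}(\mathcal I,F),\deg_{\mathcal L}(\mathcal I,G))$; $\deg_{\mathcal L}(\mathcal I,F\lor G)=\min(\deg_{\mathcal L}(\mathcal I,F),\deg_{\mathcal L}(\mathcal I,G))$; $\deg_{\mathcal L}(\mathcal I,F\circ G)=\deg_\circ(\mathrm{opt}_{\mathcal L}(F),\mathrm{opt}_{\mathcal L}(G),\deg_{\mathcal L}(\mathcal I,F),\deg_{\mathcal L}(\mathcal I,G))$ for $\circ\in C_{\mathcal L}$. An interpretation $\mathcal I$ is a preferred model of $F$, written $\mathcal I\in\mathrm{Pref}_{\mathcal L}(F)$, if $\deg_{\mathcal L}(\mathcal I,F)\ne\infty$ and $\deg_{\mathcal L}(\mathcal I,F)\le\deg_{\mathcal L}(\mathcal J,F)$ for all interpretations $\mathcal J$. $F[A/B]$ denotes the formula obtained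 from $F$ by replacing an occurrence of the subformula $A$ by $B$ (and equals $F$ if $A$ does not occur in $F$). Two $\mathcal L$-formulas $A,B$ are degree-equivalent, $A\equiv^{\deg}_{\mathcal L}B$, if $\deg_{\mathcal L}(\mathcal I,A)=\deg_{\mathcal L}(\mathcal I,B)$ for all interpretations $\mathcal I$; they are fully equivalent, $A\equiv^{\mathrm{full}}_{\mathcal L}B$, if $A\equiv^{\deg}_{\mathcal L}B$ and $\mathrm{opt}_{\mathcal L}(A)=\mathrm{opt}_{\mathcal L}(B)$; they are strongly equivalent, $A\equiv^{s}_{\mathcal L}B$, if $\mathrm{Pref}_{\mathcal L}(F)=\mathrm{Pref}_{\mathcal L}(F[A/B])$ for all $\mathcal L$-formulas $F$. $\mathcal L$ is optionality-differentiating if for all $\mathcal L$-formulas $A,B$ with $\mathrm{opt}_{\mathcal L}(A)\neq\mathrm{opt}_{\mathcal L}(B)$ there is an $\mathcal L$-formula $F$ with $F\not\equiv^{\deg}_{\mathcal L}F[A/B]$. *)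

(* Defs.v *)
From Stdlib Require Import PArith List.
Set Implicit Arguments.

(* N = {1,2,3,...} is represented by Stdlib's [positive];
   N-bar = N ∪ {∞} is represented by [option positive], with None = ∞. *)
Definition nbar := option positive.

Definition nle (x y : nbar) : Prop :=
  match x, y with
  | _, None => True
  | None, Some _ => False
  | Some a, Some b => (a <= b)%positive
  end.

Definition nmax (x y : nbar) : nbar :=
  match x, y with
  | Some a, Some b => Some (Pos.max a b)
  | _, _ => None
  end.

Definition nmin (x y : nbar) : nbar :=
  match x, y with
  | Some a, Some b => Some (Pos.min a b)
  | Some a, None => Some a
  | None, y => y
  end.

Record ChoiceLogic := {
  conn : Type;
  conn_enum : list conn;
  conn_finite : forall c : conn, In c conn_enum;
  optc : conn -> positive -> positive -> positive;
  degc : conn -> positive -> positive -> nbar -> nbar -> nbar;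
  optc_bound : forall c k l, (optc c k l <= (k + 1) * (l + 1))%positive;
  degc_bound : forall c k l m n,
    degc c k l m n = None \/ nle (degc c k l m n) (Some (optc c k l))
}.

(* Propositional variables: U = nat (countably infinite). The connective
   symbols are constructors distinct from Neg/And/Or, hence disjoint. *)
Inductive formula (C : Type) : Type :=
| Var : nat -> formula C
| Neg : formula C -> formula C
| And : formula C -> formula C -> formula C
| Or  : formula C -> formula C -> formula C
| Conn : C -> formula C -> formula C -> formula C.

Arguments Var {C} _.

(* Interpretations: subsets of U = nat, as characteristic functions. *)
Definition interp := nat -> bool.

Fixpoint opt (L : ChoiceLogic) (F : formula (conn L)) : positive :=
  match F with
  | Var _ => 1%positive
  | Neg _ => 1%positive
  | And F G => Pos.max (opt L F) (opt L G)
  | Or F G => Pos.max (opt L F) (opt L G)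
  | Conn c F G => optc L c (opt L F) (opt L G)
  end.

Fixpoint deg (L : ChoiceLogic) (I : interp) (F : formula (conn L)) : nbar :=
  match F with
  | Var a => if I a then Some 1%positive else None
  | Neg F => match deg L I F with None => Some 1%positive | Some _ => None end
  | And F G => nmax (deg L I F) (deg L I G)
  | Or F G => nmin (deg L I F) (deg L I G)
  | Conn c F G => degc L c (opt L F) (opt L G) (deg L I F) (deg L I G)
  end.

Definition Pref (L : ChoiceLogic) (F : formula (conn L)) (I : interp) : Prop :=
  deg L I F <> None /\ forall J : interp, nle (deg L I F) (deg L J F).

(* One-hole contexts: F[A/B] (replacing one occurrence of A in F by B) is
   [plug K B] where F = [plug K A]. *)
Inductive ctx (C : Type) : Type :=
| Hole : ctx C
| NegC : ctx C -> ctx C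
| AndL : ctx C -> formula C -> ctx C
| AndR : formula C -> ctx C -> ctx C
| OrL  : ctx C -> formula C -> ctx C
| OrR  : formula C -> ctx C -> ctx C
| ConnL : C -> ctx C -> formula C -> ctx C
| ConnR : C -> formula C -> ctx C -> ctx C.

Arguments Hole {C}.

Fixpoint plug (C : Type) (K : ctx C) (X : formula C) : formula C :=
  match K with
  | Hole => X
  | NegC K => Neg (plug K X)
  | AndL K G => And (plug K X) G
  | AndR F K => And F (plug K X)
  | OrL K G => Or (plug K X) G
  | OrR F K => Or F (plug K X)
  | ConnL c K G => Conn c (plug K X) G
  | ConnR c F K => Conn c F (plug K X)
  end.

Definition deg_equiv (L : ChoiceLogic) (A B : formula (conn L)) : Prop :=
  forall I, deg L I A = deg L I B.

Definition full_equiv (L : ChoiceLogic) (A B : formula (conn L)) : Prop :=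
  deg_equiv L A B /\ opt L A = opt L B.

(* Strong equivalence: Pref(F) = Pref(F[A/B]) for all F (and every
   occurrence of A in F; if A does not occur, F[A/B] = F and the condition
   is trivial). *)
Definition strong_equiv (L : ChoiceLogic) (A B : formula (conn L)) : Prop :=
  forall K : ctx (conn L), forall I : interp,
    Pref L (plug K A) I <-> Pref L (plug K B) I.

Definition opt_differentiating (L : ChoiceLogic) : Prop :=
  forall A B : formula (conn L), opt L A <> opt L B ->
    exists K : ctx (conn L), ~ deg_equiv L (plug K A) (plug K B).

(* Main.v *)
Require Import Defs.
From Stdlib Require Import PArith List Lia Bool Arith.
Import ListNotations.

Section S.
Variable L : ChoiceLogic.
Notation F := (formula (conn L)).

Fixpoint vars (X : F) : list nat :=
  match X with
  | Var a => [a]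
  | Neg X => vars X
  | And X Y => vars X ++ vars Y
  | Or X Y => vars X ++ vars Y
  | Conn _ X Y => vars X ++ vars Y
  end.

Lemma deg_ext (X : F) (I J : interp) :
  (forall v, In v (vars X) -> I v = J v) -> deg L I X = deg L J X.
Proof.
  induction X; simpl; intros H.
  - rewrite (H n) by auto. reflexivity.
  - rewrite IHX by auto. reflexivity.
  - rewrite IHX1, IHX2 by (intros; apply H; apply in_or_app; auto). reflexivity.
  - rewrite IHX1, IHX2 by (intros; apply H; apply in_or_app; auto). reflexivity.
  - rewrite IHX1, IHX2 by (intros; apply H; apply in_or_app; auto). reflexivity.
Qed.

Fixpoint comp (K1 K2 : ctx (conn L)) : ctx (conn L) :=
  match K1 with
  | Hole => K2
  | NegC K => NegC (comp K K2)
  | AndL K G => AndL (comp K K2) G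
  | AndR G K => AndR G (comp K K2)
  | OrL K G => OrL (comp K K2) G
  | OrR G K => OrR G (comp K K2)
  | ConnL c K G => ConnL c (comp K K2) G
  | ConnR c G K => ConnR c G (comp K K2)
  end.

Lemma plug_comp K1 K2 (X : F) : plug (comp K1 K2) X = plug K1 (plug K2 X).
Proof. induction K1; simpl; try rewrite IHK1; reflexivity. Qed.

Lemma plug_full (A B : F) : deg_equiv L A B -> opt L A = opt L B ->
  forall K, deg_equiv L (plug K A) (plug K B) /\ opt L (plug K A) = opt L (plug K B).
Proof.
  intros HD HO K; induction K; simpl; try (destruct IHK as [H1 H2]);
    (split; [intro I; simpl| simpl]); auto;
    try (rewrite H1; reflexivity); try (rewrite H2; reflexivity);
    try (rewrite H1, H2; reflexivity).
Qed.

Fixpoint maxl (l : list nat) : nat :=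
  match l with [] => 0 | x :: l => Nat.max x (maxl l) end.

Lemma maxl_in l v : In v l -> v <= maxl l.
Proof. induction l; simpl; [tauto|]; intros [H|H]; subst; try lia. specialize (IHl H); lia. Qed.

Definition chi (I : interp) (l : list nat) : F :=
  fold_right (fun v acc => And (if I v then Var v else Neg (Var v)) acc)
    (Or (Var 0) (Neg (Var 0))) l.

Lemma chi_deg I J l :
  deg L J (chi I l) = if forallb (fun v => Bool.eqb (J v) (I v)) l then Some 1%positive else None.
Proof.
  induction l; simpl.
  - destruct (J 0); reflexivity.
  - fold (chi I l). rewrite IHl.
    destruct (I a), (J a) eqn:E; simpl; rewrite ?E;
      destruct (forallb _ l); reflexivity.
Qed.

Lemma nmax_one x : nmax x (Some 1%positive) = x.
Proof. destruct x; simpl; auto. f_equal. lia. Qed.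
Lemma nmax_none x : nmax x None = None.
Proof. destruct x; auto. Qed.
Lemma nmin_none x : nmin x None = x.
Proof. destruct x; auto. Qed.
Lemma nle_refl x : nle x x.
Proof. destruct x; simpl; auto; lia. Qed.

Lemma key (A B : F) : strong_equiv L A B -> deg_equiv L A B.
Proof.
  intros HS I.
  assert (Hdec : forall x y : nbar, {x = y} + {x <> y})
    by (decide equality; apply Pos.eq_dec).
  destruct (Hdec (deg L I A) (deg L I B)) as [e|ne]; [exact e|exfalso].
  set (V := vars A ++ vars B).
  set (p := S (maxl V)).
  set (c := chi I V).
  set (K := OrL (AndL (AndL Hole c) (Var p)) (And (And B c) (Neg (Var p)))).
  set (agree := fun J : interp => forallb (fun v => Bool.eqb (J v) (I v)) V).
  assert (HK : forall X, (forall v, In v (vars X) -> In v V) -> forall J,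
     deg L J (plug K X) = if agree J then (if J p then deg L I X else deg L I B) else None).
  { intros X HX J. simpl. unfold c. rewrite chi_deg. fold (agree J).
    destruct (agree J) eqn:Ha.
    - assert (HJ : forall v, In v V -> J v = I v).
      { intros v Hv. unfold agree in Ha. rewrite forallb_forall in Ha.
        apply eqb_prop, Ha, Hv. }
      rewrite (deg_ext X J I) by auto.
      rewrite (deg_ext B J I) by (intros; apply HJ; unfold V; apply in_or_app; auto).
      destruct (J p); simpl; rewrite !nmax_one.
      + rewrite nmax_none, nmin_none. reflexivity.
      + rewrite nmax_none. reflexivity.
    - rewrite !nmax_none. reflexivity. }
  assert (HA := HK A ltac:(intros; unfold V; apply in_or_app; auto)).
  assert (HB := HK B ltac:(intros; unfold V; apply in_or_app; auto)).
  clearbody K.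
  set (I1 := fun v => if Nat.eqb v p then true else I v).
  set (I0 := fun v => if Nat.eqb v p then false else I v).
  assert (Hag : forall b, agree (fun v => if Nat.eqb v p then b else I v) = true).
  { intro b. unfold agree. apply forallb_forall. intros v Hv.
    assert (v <> p) by (apply maxl_in in Hv; unfold p; lia).
    apply Nat.eqb_neq in H. rewrite H. apply eqb_reflx. }
  assert (H1 : agree I1 = true) by apply Hag.
  assert (H0 : agree I0 = true) by apply Hag.
  assert (P1 : I1 p = true) by (unfold I1; rewrite Nat.eqb_refl; auto).
  assert (P0 : I0 p = false) by (unfold I0; rewrite Nat.eqb_refl; auto).
  destruct (deg L I B) as [y|] eqn:Eb.
  - assert (PB : forall J, agree J = true -> Pref L (plug K B) J).
    { intros J HJ. split.
      - rewrite HB, HJ. destruct (J p); discriminate.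
      - intro J'. rewrite !HB, HJ. destruct (J p), (agree J'), (J' p);
          simpl; auto; lia. }
    destruct (proj2 (HS K I1) (PB I1 H1)) as [Na1 La1].
    destruct (proj2 (HS K I0) (PB I0 H0)) as [Na0 La0].
    specialize (La1 I0). specialize (La0 I1).
    rewrite !HA, H1, H0, P1, P0 in *.
    destruct (deg L I A) as [x|]; [|contradiction].
    simpl in *. apply ne. f_equal. lia.
  - destruct (deg L I A) as [x|] eqn:Ea; [|contradiction].
    assert (PA : Pref L (plug K A) I1).
    { split.
      - rewrite HA, H1, P1. discriminate.
      - intro J. rewrite !HA, H1, P1. destruct (agree J), (J p); simpl; auto. lia. }
    destruct (proj1 (HS K I1) PA) as [N _].
    rewrite HB, H1, P1 in N. apply N; reflexivity.
Qed.

End S.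

Theorem mainTheorem8 (L : ChoiceLogic) (HL : opt_differentiating L)
  (A B : formula (conn L)) :
  strong_equiv L A B <-> full_equiv L A B.
Proof.
  split.
  - intros HS. split.
    + apply (key L); auto.
    + destruct (Pos.eq_dec (opt L A) (opt L B)) as [e|ne]; auto.
      destruct (HL A B ne) as [K HK]. exfalso. apply HK.
      apply (key L). intros K' I. rewrite <- !(plug_comp L). apply HS.
  - intros [HD HO] K I.
    destruct (plug_full L A B HD HO K) as [HD' _].
    unfold Pref. split; intros [H1 H2]; split.
    + rewrite <- (HD' I); auto.
    + intro J; rewrite <- (HD' I), <- (HD' J); auto.
    + rewrite (HD' I); auto.
    + intro J; rewrite (HD' I), (HD' J); auto.
Qed.
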